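(* Let $L>0$ and let $\alpha,\beta:\mathbb{R}\to\mathbb{R}^2$ be smooth $L$-periodic maps with $\alpha'$ nowhere zero, $\langle\beta,\alpha'\rangle = 0$ and $|\alpha'|^2+|\beta|^2=1$. Define \[ \gamma(t,s) = \tfrac12\big(\alpha(s+t)+\alpha(s-t)\big) + \tfrac12\int_{s-t}^{s+t}\beta(\xi)\,d\xi, \] $a = \alpha'+\beta$, $b = \alpha'-\beta$, and smooth functions $\zeta,\eta$ by $a' = \zeta\, a^\perp$, $b' = \eta\, b^\perp$. Suppose that $(t_0,s_0)$ satisfies $\gamma_{,s}(t_0,s_0) = 0$, i.e. $a(s_0+t_0)+b(s_0-t_0) = 0$, and that \[ \zeta(s_0+t_0) \neq \eta(s_0-t_0). \] Then the unit tangent map $U(t_0,\cdot) = \gamma_{,s}(t_0,\cdot)/|\gamma_{,s}(t_0,\cdot)|$ of the curve $s\mapsto\gamma(t_0,s)$ is discontinuous at $s_0$; more specifically, it reverses direction across $s_0$: the one-sided limits $\lim_{s\to s_0^\pm}U(t_0,s)$ exist and are opposite unit vectors.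
   Context: For $v=(v_1,v_2)\in\mathbb{R}^2$, $v^\perp = (-v_2,v_1)$. Since $|a|=|b|=1$, the functions $\zeta,\eta$ are well defined. Note $2\gamma_{,s}(t,s) = a(s+t)+b(s-t)$, and $U(t,s)$ is defined wherever $\gamma_{,s}(t,s)\ne 0$. *)

(* Defs.v *)
From Stdlib Require Import Reals.
From Coquelicot Require Import Coquelicot.
Open Scope R_scope.

Definition smooth (f : R -> R) : Prop :=
  forall (n : nat) (x : R), ex_derive (Derive_n f n) x.

Definition periodic (L : R) (f : R -> R) : Prop :=
  forall x, f (x + L) = f x.

Definition gamma_c (alpha_i beta_i : R -> R) (t s : R) : R :=
  (alpha_i (s + t) + alpha_i (s - t)) / 2 + RInt beta_i (s - t) (s + t) / 2.

Definition gamma_s_c (alpha_i beta_i : R -> R) (t s : R) : R :=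
  Derive (fun s' => gamma_c alpha_i beta_i t s') s.

(* one component (the one given by alpha_i, beta_i) of the unit tangent
   U(t,s) = gamma_{,s}(t,s) / |gamma_{,s}(t,s)| *)
Definition U_c (alpha_i beta_i alpha1 beta1 alpha2 beta2 : R -> R) (t s : R) : R :=
  gamma_s_c alpha_i beta_i t s /
  sqrt ((gamma_s_c alpha1 beta1 t s) ^ 2 + (gamma_s_c alpha2 beta2 t s) ^ 2).

(* Main.v *)
Require Import Defs.
From Stdlib Require Import Reals.
From Coquelicot Require Import Coquelicot.
From Stdlib Require Import Lra.
Open Scope R_scope.

Lemma dq_lim (G : R -> R) (s0 D : R) : is_derive G s0 D -> G s0 = 0 ->
  is_lim (fun s => G s / (s - s0)) s0 D.
Proof.
  intros HD H0. apply is_derive_Reals in HD.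
  intros P [eps HP].
  destruct (HD eps (cond_pos eps)) as [delta Hd].
  exists delta. intros y Hy Hne. change R in y. apply HP.
  assert (Hh : y - s0 <> 0) by (intro; apply Hne; lra).
  unfold ball in Hy; simpl in Hy; unfold AbsRing_ball, abs, minus, plus, opp in Hy; simpl in Hy.
  specialize (Hd (y - s0) Hh Hy).
  replace (s0 + (y - s0)) with y in Hd by ring. rewrite H0 in Hd.
  unfold ball in Hy; simpl in Hy; unfold AbsRing_ball, abs, minus, plus, opp in Hy; simpl in Hy.
  unfold ball; simpl; unfold AbsRing_ball, abs, minus, plus, opp; simpl.
  replace (G y / (y - s0) + - D) with ((G y - 0) / (y - s0) - D) by (unfold Rdiv; ring). exact Hd.
Qed.

Lemma lim_norm (Q1 Q2 : R -> R) (s0 D1 D2 : R) :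
  is_lim Q1 s0 D1 -> is_lim Q2 s0 D2 ->
  is_lim (fun s => sqrt (Q1 s * Q1 s + Q2 s * Q2 s)) s0 (sqrt (D1 * D1 + D2 * D2)).
Proof.
  intros H1 H2.
  assert (Hs : is_lim (fun s => Q1 s * Q1 s + Q2 s * Q2 s) s0 (D1*D1+D2*D2)).
  { eapply is_lim_plus.
    - apply (is_lim_mult _ _ s0 D1 D1); [exact H1|exact H1|simpl; auto].
    - apply (is_lim_mult _ _ s0 D2 D2); [exact H2|exact H2|simpl; auto].
    - simpl. reflexivity. }
  eapply filterlim_comp. exact Hs.
  apply continuity_pt_filterlim. apply continuity_pt_sqrt. nra.
Qed.

Lemma alg_id (h Q1 Q2 Qi : R) : h <> 0 -> 0 < sqrt (Q1*Q1+Q2*Q2) ->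
  (h*Qi/2) / sqrt ((h*Q1/2)^2 + (h*Q2/2)^2) = (h / Rabs h) * (Qi / sqrt (Q1*Q1+Q2*Q2)).
Proof.
  intros Hh HS.
  assert (E : (h*Q1/2)^2 + (h*Q2/2)^2 = (Rabs h/2)*(Rabs h/2) * (Q1*Q1+Q2*Q2)).
  { replace ((Rabs h/2)*(Rabs h/2)) with (Rabs h * Rabs h / 4) by field.
    rewrite <- Rabs_mult, Rabs_right by nra. field. }
  rewrite E, sqrt_mult_alt by (apply Rmult_le_pos; apply Rmult_le_pos; try apply Rabs_pos; lra).
  rewrite sqrt_square by (apply Rmult_le_pos; [apply Rabs_pos|lra]).
  assert (Rabs h <> 0) by (apply Rabs_no_R0; auto).
  field. split; lra.
Qed.

Lemma le_right (s0 : R) : filter_le (at_right s0) (Rbar_locally' s0).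
Proof.
  intros P [e He]. exists e. intros y By Hy. apply He; auto. intro; subst; lra.
Qed.
Lemma le_left (s0 : R) : filter_le (at_left s0) (Rbar_locally' s0).
Proof.
  intros P [e He]. exists e. intros y By Hy. apply He; auto. intro; subst; lra.
Qed.

Lemma main_lim (g1 g2 G1 G2 : R -> R) (s0 D1 D2 : R) :
  (forall s, g1 s = G1 s / 2) -> (forall s, g2 s = G2 s / 2) ->
  is_derive G1 s0 D1 -> is_derive G2 s0 D2 -> G1 s0 = 0 -> G2 s0 = 0 ->
  0 < D1*D1+D2*D2 ->
  (exists d, 0 < d /\ forall s, 0 < Rabs (s - s0) < d -> g1 s <> 0 \/ g2 s <> 0) /\
  (exists u1 u2 : R,
     u1 ^ 2 + u2 ^ 2 = 1 /\
     filterlim (fun s => g1 s / sqrt (g1 s ^ 2 + g2 s ^ 2)) (at_right s0) (locally u1) /\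
     filterlim (fun s => g2 s / sqrt (g1 s ^ 2 + g2 s ^ 2)) (at_right s0) (locally u2) /\
     filterlim (fun s => g1 s / sqrt (g1 s ^ 2 + g2 s ^ 2)) (at_left s0) (locally (- u1)) /\
     filterlim (fun s => g2 s / sqrt (g1 s ^ 2 + g2 s ^ 2)) (at_left s0) (locally (- u2))).
Proof.
  intros E1 E2 H1 H2 Z1 Z2 HD.
  set (Q1 := fun s => G1 s / (s - s0)). set (Q2 := fun s => G2 s / (s - s0)).
  set (S := fun s => sqrt (Q1 s * Q1 s + Q2 s * Q2 s)).
  set (N := sqrt (D1*D1+D2*D2)).
  assert (HN : 0 < N) by (apply sqrt_lt_R0; auto).
  assert (HQ1 : is_lim Q1 s0 D1) by (apply dq_lim; auto).
  assert (HQ2 : is_lim Q2 s0 D2) by (apply dq_lim; auto).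
  assert (HS : is_lim S s0 N) by (apply lim_norm; auto).
  assert (HG : forall s, s <> s0 -> forall G (g : R -> R), (forall s, g s = G s / 2) ->
      g s = (s - s0) * (G s / (s - s0)) / 2).
  { intros s Hs G g Eg. rewrite Eg. field. intro; apply Hs; lra. }
  destruct (HS (fun z => 0 < z)) as [eps Heps].
  { exists (mkposreal N HN). intros z Bz. unfold ball in Bz; simpl in Bz;
    unfold AbsRing_ball, abs, minus, plus, opp in Bz; simpl in Bz.
    apply Rabs_lt_between' in Bz. lra. }
  assert (Hev : forall s, Rabs (s - s0) < eps -> s <> s0 -> 0 < S s).
  { intros s Hs Hne. apply Heps; auto. }
  assert (HV1 : is_lim (fun s => Q1 s / S s) s0 (D1 / N)).
  { apply (is_lim_div _ _ s0 D1 N); auto. intro Hc; injection Hc; lra. simpl; try exact I; intro Hc; lra. }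
  assert (HV2 : is_lim (fun s => Q2 s / S s) s0 (D2 / N)).
  { apply (is_lim_div _ _ s0 D2 N); auto. intro Hc; injection Hc; lra. simpl; try exact I; intro Hc; lra. }
  assert (Hid : forall s, Rabs (s - s0) < eps -> s <> s0 -> forall Qi G (g : R -> R),
      (forall s, g s = G s / 2) -> Qi = G s / (s - s0) ->
      g s / sqrt (g1 s ^ 2 + g2 s ^ 2) = ((s - s0) / Rabs (s - s0)) * (Qi / S s)).
  { intros s Hs Hne Qi G g Eg EQ.
    rewrite (HG s Hne G g Eg), (HG s Hne G1 g1 E1), (HG s Hne G2 g2 E2).
    rewrite <- EQ. apply alg_id. intro; apply Hne; lra. apply (Hev s Hs Hne). }
  split.
  - exists eps. split. apply cond_pos. intros s [Hs1 Hs2].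
    assert (Hne : s <> s0). { intro; subst. rewrite Rminus_diag, Rabs_R0 in Hs1. lra. }
    specialize (Hev s Hs2 Hne). unfold S in Hev.
    destruct (Req_dec (Q1 s) 0) as [Ha|Ha]; [destruct (Req_dec (Q2 s) 0) as [Hb|Hb]|].
    + rewrite Ha, Hb, Rmult_0_l, Rplus_0_l, sqrt_0 in Hev. lra.
    + right. rewrite (HG s Hne G2 g2 E2). fold (Q2 s).
      intro Hc. apply Hb. assert (s - s0 <> 0) by lra. nra.
    + left. rewrite (HG s Hne G1 g1 E1). fold (Q1 s).
      intro Hc. apply Ha. assert (s - s0 <> 0) by lra. nra.
  - exists (D1 / N), (D2 / N). split.
    { replace ((D1/N)^2 + (D2/N)^2) with ((D1*D1+D2*D2)/(N*N)) by (field; lra).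
      unfold N. rewrite sqrt_sqrt by lra. field. lra. }
    assert (Rr : forall s, Rabs (s - s0) < eps -> s0 < s -> (s - s0) / Rabs (s - s0) = 1).
    { intros s _ Hs. rewrite Rabs_right by lra. field. lra. }
    assert (Rl : forall s, Rabs (s - s0) < eps -> s < s0 -> (s - s0) / Rabs (s - s0) = -1).
    { intros s _ Hs. rewrite Rabs_left by lra. field. lra. }
    repeat split.
    + eapply filterlim_ext_loc.
      2: { eapply filterlim_filter_le_1. apply le_right. exact HV1. }
      exists eps. intros s Bs Hs. unfold ball in Bs; simpl in Bs;
      unfold AbsRing_ball, abs, minus, plus, opp in Bs; simpl in Bs.
      rewrite (Hid s Bs ltac:(lra) (Q1 s) G1 g1 E1 eq_refl), Rr; auto. ring.
    + eapply filterlim_ext_loc.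
      2: { eapply filterlim_filter_le_1. apply le_right. exact HV2. }
      exists eps. intros s Bs Hs. unfold ball in Bs; simpl in Bs;
      unfold AbsRing_ball, abs, minus, plus, opp in Bs; simpl in Bs.
      rewrite (Hid s Bs ltac:(lra) (Q2 s) G2 g2 E2 eq_refl), Rr; auto. ring.
    + eapply filterlim_ext_loc.
      2: { eapply filterlim_filter_le_1. apply le_left. exact (is_lim_opp _ _ _ HV1). }
      exists eps. intros s Bs Hs. unfold ball in Bs; simpl in Bs;
      unfold AbsRing_ball, abs, minus, plus, opp in Bs; simpl in Bs.
      rewrite (Hid s Bs ltac:(lra) (Q1 s) G1 g1 E1 eq_refl), Rl; auto. ring.
    + eapply filterlim_ext_loc.
      2: { eapply filterlim_filter_le_1. apply le_left. exact (is_lim_opp _ _ _ HV2). }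
      exists eps. intros s Bs Hs. unfold ball in Bs; simpl in Bs;
      unfold AbsRing_ball, abs, minus, plus, opp in Bs; simpl in Bs.
      rewrite (Hid s Bs ltac:(lra) (Q2 s) G2 g2 E2 eq_refl), Rl; auto. ring.
Qed.
Lemma sm_cont (f : R -> R) (x : R) : smooth f -> continuous f x.
Proof. intros H. apply (@ex_derive_continuous R_AbsRing R_NormedModule). exact (H 0%nat x). Qed.
Lemma gamma_formula al be t s : smooth al -> smooth be -> gamma_s_c al be t s = (Derive al (s+t) + Derive al (s-t) + be(s+t) - be(s-t))/2.
Proof.
intros Ha Hb. unfold gamma_s_c. apply is_derive_unique. unfold gamma_c.
auto_derive.
- repeat split.
  + exact (Ha 0%nat _).
  + exact (Ha 0%nat _).
  + apply (@ex_RInt_continuous R_CompleteNormedModule). intros; apply sm_cont; auto.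
  + apply filter_forall. intros; apply continuity_pt_filterlim; apply sm_cont; auto.
  + apply filter_forall. intros; apply continuity_pt_filterlim; apply sm_cont; auto.
- change (Derive (fun x => al x)) with (Derive al). change (fun x:R => be x) with be. replace (s + - t) with (s - t) by ring. lra.
Qed.

Lemma G_deriv (al be : R -> R) (t s : R) : smooth al -> smooth be ->
  is_derive (fun s => Derive al (s+t) + Derive al (s-t) + be(s+t) - be(s-t)) s
    (Derive (fun y => Derive al y + be y) (s+t) + Derive (fun y => Derive al y - be y) (s-t)).
Proof.
  intros Ha Hb.
  assert (EA : forall x, ex_derive (fun y => Derive al y + be y) x).
  { intros x. auto_derive. split. exact (Ha 1%nat x). split. exact (Hb 0%nat x). exact I. }
  assert (EB : forall x, ex_derive (fun y => Derive al y - be y) x).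
  { intros x. auto_derive. split. exact (Ha 1%nat x). split. exact (Hb 0%nat x). exact I. }
  apply (is_derive_ext (fun s => (fun y => Derive al y + be y) (s+t) + (fun y => Derive al y - be y) (s-t))).
  { intros; simpl; ring. }
  auto_derive.
  - repeat split; first [exact (Ha 1%nat _) | exact (Hb 0%nat _)].
  - rewrite Derive_plus by first [exact (Ha 1%nat _) | exact (Hb 0%nat _)].
    rewrite Derive_minus by first [exact (Ha 1%nat _) | exact (Hb 0%nat _)].
    replace (s + - t) with (s - t) by ring. change (fun x => Derive al x) with (Derive al).
    change (fun x : R => be x) with be. ring.
Qed.
Theorem lemma2p4 (L : R) (al1 al2 be1 be2 zeta eta : R -> R) (t0 s0 : R) :
  0 < L ->
  smooth al1 -> smooth al2 -> smooth be1 -> smooth be2 ->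
  periodic L al1 -> periodic L al2 -> periodic L be1 -> periodic L be2 ->
  (* alpha' nowhere zero *)
  (forall x, Derive al1 x <> 0 \/ Derive al2 x <> 0) ->
  (* <beta, alpha'> = 0 *)
  (forall x, be1 x * Derive al1 x + be2 x * Derive al2 x = 0) ->
  (* |alpha'|^2 + |beta|^2 = 1 *)
  (forall x, (Derive al1 x) ^ 2 + (Derive al2 x) ^ 2 + (be1 x) ^ 2 + (be2 x) ^ 2 = 1) ->
  (* a = alpha' + beta, a' = zeta a^perp, with a^perp = (-a_2, a_1) *)
  (forall x,
     Derive (fun y => Derive al1 y + be1 y) x = zeta x * (- (Derive al2 x + be2 x)) /\
     Derive (fun y => Derive al2 y + be2 y) x = zeta x * (Derive al1 x + be1 x)) ->
  (* b = alpha' - beta, b' = eta b^perp *)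
  (forall x,
     Derive (fun y => Derive al1 y - be1 y) x = eta x * (- (Derive al2 x - be2 x)) /\
     Derive (fun y => Derive al2 y - be2 y) x = eta x * (Derive al1 x - be1 x)) ->
  (* gamma_{,s}(t0,s0) = 0 *)
  gamma_s_c al1 be1 t0 s0 = 0 -> gamma_s_c al2 be2 t0 s0 = 0 ->
  zeta (s0 + t0) <> eta (s0 - t0) ->
  (* U(t0,.) is defined on a punctured neighbourhood of s0 ... *)
  (exists d, 0 < d /\ forall s, 0 < Rabs (s - s0) < d ->
     gamma_s_c al1 be1 t0 s <> 0 \/ gamma_s_c al2 be2 t0 s <> 0) /\
  (* ... and its one-sided limits exist and are opposite unit vectors *)
  (exists u1 u2 : R,
     u1 ^ 2 + u2 ^ 2 = 1 /\
     filterlim (fun s => U_c al1 be1 al1 be1 al2 be2 t0 s) (at_right s0) (locally u1) /\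
     filterlim (fun s => U_c al2 be2 al1 be1 al2 be2 t0 s) (at_right s0) (locally u2) /\
     filterlim (fun s => U_c al1 be1 al1 be1 al2 be2 t0 s) (at_left s0) (locally (- u1)) /\
     filterlim (fun s => U_c al2 be2 al1 be1 al2 be2 t0 s) (at_left s0) (locally (- u2))).
Proof.
  intros HL Sa1 Sa2 Sb1 Sb2 _ _ _ _ _ Horth Hnorm Hz He Z1 Z2 Hne.
  set (G1 := fun s => Derive al1 (s+t0) + Derive al1 (s-t0) + be1(s+t0) - be1(s-t0)).
  set (G2 := fun s => Derive al2 (s+t0) + Derive al2 (s-t0) + be2(s+t0) - be2(s-t0)).
  assert (E1 : forall s, gamma_s_c al1 be1 t0 s = G1 s / 2) by (intros; apply gamma_formula; auto).
  assert (E2 : forall s, gamma_s_c al2 be2 t0 s = G2 s / 2) by (intros; apply gamma_formula; auto).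
  pose proof (G_deriv al1 be1 t0 s0 Sa1 Sb1) as D1.
  pose proof (G_deriv al2 be2 t0 s0 Sa2 Sb2) as D2.
  unfold U_c.
  apply (main_lim _ _ G1 G2 s0 _ _ E1 E2 D1 D2).
  - rewrite E1 in Z1. lra.
  - rewrite E2 in Z2. lra.
  - destruct (Hz (s0+t0)) as [Hz1 Hz2]. destruct (He (s0-t0)) as [He1 He2].
    rewrite Hz1, Hz2, He1, He2.
    rewrite E1 in Z1. rewrite E2 in Z2. unfold G1, G2 in Z1, Z2.
    pose proof (Horth (s0+t0)) as O. pose proof (Hnorm (s0+t0)) as N.
    set (x1 := Derive al1 (s0+t0)) in *. set (x2 := Derive al2 (s0+t0)) in *.
    set (y1 := be1 (s0+t0)) in *. set (y2 := be2 (s0+t0)) in *.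
    set (z := zeta (s0+t0)) in *. set (w := eta (s0-t0)) in *.
    assert (B1 : Derive al1 (s0-t0) - be1 (s0-t0) = -(x1 + y1)) by lra.
    assert (B2 : Derive al2 (s0-t0) - be2 (s0-t0) = -(x2 + y2)) by lra.
    rewrite B1, B2.
    assert (A : (x1+y1)^2 + (x2+y2)^2 = 1) by nra.
    assert (P : 0 < (z - w)^2) by (apply pow2_gt_0; intro; apply Hne; unfold z, w in *; lra).
    replace ((z * - (x2 + y2) + w * - - (x2 + y2)) * (z * - (x2 + y2) + w * - - (x2 + y2)) +
      (z * (x1 + y1) + w * - (x1 + y1)) * (z * (x1 + y1) + w * - (x1 + y1)))
      with ((z-w)^2 * ((x1+y1)^2 + (x2+y2)^2)) by ring.
    rewrite A. lra.
Qed.
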